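(* Let $\Theta$ be a finite-dimensional real inner product space, $\mathcal L:\Theta\to\mathbb R_+$ differentiable, $\theta_0\in\Theta$, $\varepsilon\in\mathbb R_+^*$, $R\in\mathbb R_+$, $c\in\mathbb R_+^*$. If for all $\theta\in\Theta$ with $\|\theta-\theta_0\|\le R$ it holds $\|\nabla\mathcal L(\theta)\|\ge(\mathcal L(\theta)-\varepsilon)_+/(\|\theta-\theta_0\|+c)$, then $(\mathcal L,\theta_0)$ satisfies the Convergence Criterion with limit error $\varepsilon_0=\tau\mathcal L(\theta_0)+(1-\tau)\varepsilon$, where $\tau=c/(R+c)\in(0,1]$, and with constant $\kappa=3c^{-2}(\mathcal L(\theta_0)-\varepsilon)_+^{-2}\in\mathbb R_+\cup\{+\infty\}$.
   Context: $(x)_+=\max\{0,x\}$. Convergence Criterion: $(\mathcal L,\theta_0)$ satisfies it with limit error $\varepsilon$ and constant $\kappa\in\mathbb R_+$ if every $\theta:\mathbb R_+\to\Theta$ with $\theta(0)=\theta_0$ and $\partial_t\theta=-\nabla\mathcal L(\theta)$ satisfies $\mathcal L(\theta_t)\le\varepsilon+(\kappa t+1/c)^{-1/3}$ for all $t>0$, where $c=\mathcal L(\theta_0)^3$. For $\kappa=+\infty$ (here arising when $\mathcal L(\theta_0)\le\varepsilon$), it means every such flow satisfies $\mathcal L(\theta_t)\le\varepsilon$ for all $t\ge0$. *)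

(* Defs.v *)
(* Theta = 'rV[R]_n with the Euclidean inner product. *)
From HB Require Import structures.
From mathcomp Require Import all_boot all_order all_algebra.
From mathcomp Require Import all_classical all_reals all_analysis.
Set Implicit Arguments. Unset Strict Implicit. Unset Printing Implicit Defensive.
Import Order.TTheory GRing.Theory Num.Theory.
Import numFieldNormedType.Exports.
Local Open Scope classical_set_scope.
Local Open Scope ring_scope.

Definition pospart {R : realType} (x : R) : R := Num.max 0 x.

Definition dotv {R : realType} {n : nat} (u v : 'rV[R]_n) : R :=
  \sum_(i < n) u ord0 i * v ord0 i.
Definition enorm {R : realType} {n : nat} (v : 'rV[R]_n) : R :=
  Num.sqrt (dotv v v).

Definition grad {R : realType} {n : nat} (L : 'rV[R]_n -> R) (th : 'rV[R]_n)
  : 'rV[R]_n := \row_(i < n) ('D_(delta_mx ord0 i) L th).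

Definition gradient_flow {R : realType} {n : nat} (L : 'rV[R]_n -> R)
  (th0 : 'rV[R]_n) (th : R -> 'rV[R]_n) : Prop :=
  th 0 = th0 /\
  (th t @[t --> 0^'+] --> th0) /\
  (forall t : R, 0 < t -> is_derive t 1 th (- grad L (th t))).

Definition conv_criterion {R : realType} {n : nat} (L : 'rV[R]_n -> R)
  (th0 : 'rV[R]_n) (eps : R) (kappa : \bar R) : Prop :=
  match kappa with
  | EFin k => 0 <= k /\
      forall th : R -> 'rV[R]_n, gradient_flow L th0 th ->
        forall t : R, 0 < t ->
          L (th t) <= eps + powR (k * t + (L th0 ^+ 3)^-1) (- (1 / 3))
  | +oo%E => forall th : R -> 'rV[R]_n, gradient_flow L th0 th ->
        forall t : R, 0 <= t -> L (th t) <= eps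
  | -oo%E => False
  end.

(* Main.v *)
Require Import Defs.
From HB Require Import structures.
From mathcomp Require Import all_boot all_order all_algebra.
From mathcomp Require Import all_classical all_reals all_analysis.
From mathcomp Require Import ring lra.
Import Order.TTheory GRing.Theory Num.Theory.
Import numFieldNormedType.Exports.
Local Open Scope ring_scope.
Local Open Scope classical_set_scope.
Lemma rlim_comp {R : realType} {n : nat} (th : R -> 'rV[R]_n) (G : 'rV[R]_n -> R) :
  th t @[t --> 0^'+] --> th 0 ->
  (forall t, 0 < t -> derivable th t 1) -> continuous G ->
  forall z, 0 <= z -> G (th s) @[s --> z^'+] --> G (th z).
Proof.
move=> th0r dth cG z; rewrite le_eqVlt => /predU1P[<-|zp].
  exact: (continuous_cvg _ (cG _) th0r).
apply: cvg_at_right_filter.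
apply: (continuous_cvg _ (cG _)).
exact/differentiable_continuous/derivable1_diffP/dth.
Qed.

Lemma chain_L {R : realType} {n : nat} (L : 'rV[R]_n -> R) (th : R -> 'rV[R]_n) (t : R) :
  (forall x, differentiable L x) ->
  is_derive t 1 th (- grad L (th t)) ->
  is_derive t 1 (fun s => L (th s)) (- dotv (grad L (th t)) (grad L (th t))).
Proof.
move=> dL [dth Dth].
have dth' : differentiable th t by apply/derivable1_diffP.
have dc : differentiable (L \o th) t by apply: differentiable_comp.
apply: (@DeriveDef _ _ _ _ _ (L \o th)); first exact/derivable1_diffP.
rewrite deriveE // diff_comp //= -(deriveE _ dth') Dth linearN /=.
congr (- _).
rewrite [X in 'd L (th t) X]row_sum_delta linear_sum /dotv.
apply: eq_bigr => i _; rewrite linearZ /= -deriveE // /grad !mxE.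
by [].
Qed.
Lemma coord_derive {R : realType} {n : nat} (th : R -> 'rV[R]_n) (t : R) v i :
  is_derive t 1 th v -> is_derive t 1 (fun s => th s ord0 i) (v ord0 i).
Proof.
move=> [dth Dth].
have di := (derivable_mxP th t 1).1 dth ord0 i.
apply: DeriveDef => //.
by rewrite -Dth derive_mx // mxE.
Qed.

Lemma deriv_q {R : realType} {n : nat} (th : R -> 'rV[R]_n) (th0 : 'rV[R]_n) (t : R) v :
  is_derive t 1 th v ->
  is_derive t 1 (fun s => dotv (th s - th0) (th s - th0))
    (2 * dotv (th t - th0) v).
Proof.
move=> dth.
have -> : (fun s => dotv (th s - th0) (th s - th0)) =
   \sum_(i < n) (fun s => (th s ord0 i - th0 ord0 i) ^+ 2).
  by rewrite fct_sumE; apply/funext => s; apply: eq_bigr => i _; rewrite !mxE expr2.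
have -> : 2 * dotv (th t - th0) v = \sum_(i < n) ((2%:R * (th t ord0 i - th0 ord0 i) ^+ 1) *: v ord0 i).
  rewrite /dotv mulr_sumr; apply: eq_bigr => i _; rewrite !mxE expr1 /GRing.scale /=.
  by rewrite mulrA.
apply: is_derive_sum => i.
rewrite -(exprfctE (fun s => th s ord0 i - th0 ord0 i)).
apply: is_deriveX.
have -> : (fun s => th s ord0 i - th0 ord0 i) = (fun s => th s ord0 i) - cst (th0 ord0 i) by [].
rewrite -[v ord0 i]subr0.
apply: is_deriveB; first exact: coord_derive.
Qed.
Lemma dotv_ge0 {R : realType} {n : nat} (u : 'rV[R]_n) : 0 <= dotv u u.
Proof. by apply: sumr_ge0 => i _; rewrite -expr2 sqr_ge0. Qed.

Lemma dotvC {R : realType} {n : nat} (u w : 'rV[R]_n) : dotv u w = dotv w u.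
Proof. by apply: eq_bigr => i _; rewrite mulrC. Qed.

Lemma enorm_sq {R : realType} {n : nat} (u : 'rV[R]_n) : enorm u ^+ 2 = dotv u u.
Proof. by rewrite /enorm sqr_sqrtr // dotv_ge0. Qed.

Lemma enorm_ge0 {R : realType} {n : nat} (u : 'rV[R]_n) : 0 <= enorm u.
Proof. exact: sqrtr_ge0. Qed.

Lemma enorm0_dot {R : realType} {n : nat} (u w : 'rV[R]_n) : enorm u = 0 -> dotv u w = 0.
Proof.
move=> /eqP; rewrite /enorm sqrtr_eq0 => H.
have H0 : dotv u u = 0 by apply/eqP; rewrite eq_le H dotv_ge0.
have sqr_ge0' : forall j, 0 <= u ord0 j * u ord0 j by move=> j; rewrite -expr2 sqr_ge0.
have Hi : forall i, u ord0 i = 0.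
  move=> i; have P := psumr_eq0P _ H0.
  have /eqP := P (fun j _ => sqr_ge0' j) i isT.
  by rewrite mulf_eq0 orbb => /eqP.
by apply: big1 => i _; rewrite Hi mul0r.
Qed.

Lemma cauchy_schwarz {R : realType} {n : nat} (u w : 'rV[R]_n) :
  dotv u w <= enorm u * enorm w.
Proof.
set a := enorm u; set b := enorm w.
have [a0|apos] := eqVneq a 0; first by rewrite enorm0_dot // mulr_ge0 // enorm_ge0.
have [b0|bpos] := eqVneq b 0; first by rewrite dotvC enorm0_dot // mulr_ge0 // enorm_ge0.
have ga : 0 < a by rewrite lt_neqAle eq_sym apos enorm_ge0.
have gb : 0 < b by rewrite lt_neqAle eq_sym bpos enorm_ge0.
have H : 0 <= \sum_(i < n) (b * u ord0 i - a * w ord0 i) ^+ 2.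
  by apply: sumr_ge0 => i _; rewrite sqr_ge0.
have E : \sum_(i < n) (b * u ord0 i - a * w ord0 i) ^+ 2 =
   b ^+ 2 * dotv u u - 2 * a * b * dotv u w + a ^+ 2 * dotv w w.
  rewrite /dotv !mulr_sumr -sumrB -big_split /=; apply: eq_bigr => i _.
  by ring.
rewrite E -!enorm_sq -/a -/b in H.
have : 0 <= 2 * a * b * (a * b - dotv u w).
  by move: H; rewrite mulrBr; congr (0 <= _); ring.
rewrite pmulr_rge0 ?subr_ge0 //.
by rewrite !mulr_gt0.
Qed.
Lemma deriv_rd {R : realType} {n : nat} (th : R -> 'rV[R]_n) (th0 : 'rV[R]_n) (t d : R) v :
  0 < d -> is_derive t 1 th v ->
  is_derive t 1 (fun s => Num.sqrt (dotv (th s - th0) (th s - th0) + d ^+ 2))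
    ((2 * Num.sqrt (dotv (th t - th0) (th t - th0) + d ^+ 2))^-1 *
       (2 * dotv (th t - th0) v)).
Proof.
move=> d0 dth.
have pos : 0 < dotv (th t - th0) (th t - th0) + d ^+ 2.
  by rewrite ltr_wpDl ?dotv_ge0 // exprn_gt0.
have dq := @deriv_q _ _ th th0 t v dth.
have dg : is_derive t 1 (fun s => dotv (th s - th0) (th s - th0) + d ^+ 2)
    (2 * dotv (th t - th0) v).
  rewrite -[X in is_derive _ _ _ X]addr0.
  exact: (is_deriveD dq (is_derive_cst (d ^+ 2) t 1)).
have ds := is_derive1_sqrt pos.
exact (@is_derive1_comp _ Num.sqrt (fun s => dotv (th s - th0) (th s - th0) + d ^+ 2) t _ _ ds dg).
Qed.

Lemma rd_bound {R : realType} {n : nat} (x v : 'rV[R]_n) (d : R) :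
  0 < d ->
  (2 * Num.sqrt (dotv x x + d ^+ 2))^-1 * (2 * dotv x v) <= enorm v.
Proof.
move=> d0.
have pos : 0 < dotv x x + d ^+ 2 by rewrite ltr_wpDl ?dotv_ge0 // exprn_gt0.
have Sp : 0 < Num.sqrt (dotv x x + d ^+ 2) by rewrite sqrtr_gt0.
rewrite invfM mulrACA mulVf ?pnatr_eq0 // mul1r mulrC ler_pdivrMr //.
apply: le_trans; first exact: (cauchy_schwarz x v).
rewrite [X in _ <= X]mulrC ler_wpM2r ?enorm_ge0 //.
by rewrite /enorm ler_sqrt ?(ltW pos) // lerDl sqr_ge0.
Qed.
Lemma isd_val {R : realType} {F : R -> R} {x d : R} : is_derive x 1 F d -> F^`() x = d.
Proof. by case=> _ H; rewrite derive1E. Qed.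

Lemma nincr0 {R : realType} (F : R -> R) (a b : R) :
  0 <= a -> a <= b ->
  (forall s, 0 < s -> s <= b -> derivable F s 1) ->
  F x @[x --> 0^'+] --> F 0 ->
  (forall s, 0 < s -> s < b -> F^`() s <= 0) -> F b <= F a.
Proof.
move=> a0 ab dF F0 dneg.
have [b0|bpos] := eqVneq b 0.
  by have -> : a = b by apply/eqP; rewrite eq_le ab b0 a0.
have b0 : 0 < b by rewrite lt_neqAle eq_sym bpos (le_trans a0 ab).
have cb : {within `[0, b], continuous F}.
  apply/continuous_within_itvP => //; split => //.
  - move=> s; rewrite in_itv /= => /andP[s0 sb].
    exact/differentiable_continuous/derivable1_diffP/dF/ltW.
  - apply: cvg_at_left_filter.
    exact/differentiable_continuous/derivable1_diffP/dF.
apply: (@ler0_derive1_le_cc _ F 0 b).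
- by move=> s; rewrite in_itv /= => /andP[s0 sb]; exact/dF/ltW.
- by move=> s; rewrite in_itv /= => /andP[s0 sb]; exact: dneg.
- exact: cb.
- by apply/andP; split; [exact: le_trans a0 ab|].
- by rewrite in_itv /= a0 ab.
- exact: ab.
Qed.

Lemma Q_cont {R : realType} {n : nat} (th0 : 'rV[R]_n) :
  continuous (fun x : 'rV[R]_n => dotv (x - th0) (x - th0)).
Proof.
move=> x; apply: differentiable_continuous.
have -> : (fun x : 'rV[R]_n => dotv (x - th0) (x - th0)) =
   \sum_(i < n) ((fun y : 'rV[R]_n => y ord0 i - th0 ord0 i) *
                 (fun y : 'rV[R]_n => y ord0 i - th0 ord0 i)).
  by rewrite fct_sumE; apply/funext => y; apply: eq_bigr => i _; rewrite !mxE.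
apply: differentiable_sum => i.
have D : differentiable (fun y : 'rV[R]_n => y ord0 i - th0 ord0 i) x.
  have -> : (fun y : 'rV[R]_n => y ord0 i - th0 ord0 i) =
      (fun y : 'rV[R]_n => y ord0 i) \- cst (th0 ord0 i) by [].
  apply: differentiableB; last exact: differentiable_cst.
  exact: differentiable_coord.
exact: differentiableM.
Qed.
Lemma key_arith {R : realType} (c Rad h0 hb rb tau : R) :
  0 < c -> 0 < tau -> 0 < h0 -> tau * (Rad + c) = c -> tau * h0 < hb ->
  hb * (rb + c) <= h0 * c -> 0 <= rb -> rb < Rad.
Proof.
move=> c0 t0 h00 E lt le r0.
have H1 : (rb + c) * (tau * h0) < (rb + c) * hb.
  by rewrite ltr_pM2l // ltr_wpDl.
have H2 : (rb + c) * (tau * h0) < (Rad + c) * (tau * h0).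
  have -> : (Rad + c) * (tau * h0) = h0 * c by rewrite mulrA [_ * tau]mulrC E mulrC.
  by apply: (lt_le_trans H1); rewrite mulrC.
rewrite ltr_pM2r ?mulr_gt0 // in H2.
by rewrite -(ltrD2r c).
Qed.

Lemma pow_arith {R : realType} (x A : R) :
  0 < x -> 0 < A -> A <= (x ^+ 3)^-1 -> x <= powR A (- (1 / 3)).
Proof.
move=> x0 A0 le.
set y := powR A (- (1 / 3)).
have y0 : 0 < y by apply: powR_gt0.
have Y : y ^+ 3 = A^-1.
  rewrite /y -powR_mulrn ?powR_ge0 // -powRrM.
  have -> : - (1 / 3) * 3%:R = - 1 :> R by field.
  by rewrite powR_inv1 // ltW.
have : x ^+ 3 <= y ^+ 3.
  rewrite Y -[x ^+ 3]invrK lef_pV2 ?posrE ?invr_gt0 ?exprn_gt0 //.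
by rewrite (ler_pXn2r (n:=3)) // ?nnegrE ?ltW.
Qed.
Lemma isd_der {R : realType} {F : R -> R} {x d : R} : is_derive x 1 F d -> derivable F x 1.
Proof. by case. Qed.

Lemma isdM {R : realType} (F G : R -> R) (x dF dG : R) :
  is_derive x 1 F dF -> is_derive x 1 G dG ->
  is_derive x 1 (fun s => F s * G s) (F x * dG + G x * dF).
Proof.
move=> a b; have := is_deriveM a b; rewrite mulrfctE; by [].
Qed.

Lemma isdBc {R : realType} (F : R -> R) (k x dF : R) :
  is_derive x 1 F dF -> is_derive x 1 (fun s => F s - k) dF.
Proof.
move=> a; have := is_deriveB a (is_derive_cst k x 1); rewrite subr0; by [].
Qed.

Lemma isdDc {R : realType} (F : R -> R) (k x dF : R) :
  is_derive x 1 F dF -> is_derive x 1 (fun s => F s + k) dF.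
Proof.
move=> a; have := is_deriveD a (is_derive_cst k x 1); rewrite addr0; by [].
Qed.

Lemma isd_lin {R : realType} (k x : R) : is_derive x 1 (fun s => k * s) k.
Proof.
have := is_deriveZ k (is_derive_id x (1 : R)).
by rewrite /GRing.scale /= mulr1.
Qed.

Lemma isdX3 {R : realType} (F : R -> R) (x dF : R) :
  is_derive x 1 F dF -> is_derive x 1 (fun s => F s ^+ 3) ((3%:R * F x ^+ 2) * dF).
Proof.
move=> a; have := is_deriveX 3 a; rewrite exprfctE; by [].
Qed.

Lemma isdV {R : realType} (F : R -> R) (x dF : R) :
  F x != 0 -> is_derive x 1 F dF ->
  is_derive x 1 (fun s => (F s)^-1) (- (F x) ^- 2 * dF).
Proof. move=> nz a; exact: is_deriveV. Qed.

Lemma isdB2 {R : realType} (F G : R -> R) (x dF dG : R) :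
  is_derive x 1 F dF -> is_derive x 1 G dG ->
  is_derive x 1 (fun s => F s - G s) (dF - dG).
Proof. move=> a b; have := is_deriveB a b; by []. Qed.

Lemma rlim0 {R : realType} {n : nat} (th : R -> 'rV[R]_n) (G : 'rV[R]_n -> R) :
  th t @[t --> 0^'+] --> th 0 -> {for th 0, continuous G} ->
  G (th s) @[s --> 0^'+] --> G (th 0).
Proof. by move=> th0r cG; exact: (continuous_cvg _ cG th0r). Qed.
Lemma phi_arith {R : realType} (h A G r rd c : R) :
  0 < h -> 0 <= G -> A <= G -> h <= G * (r + c) -> r <= rd ->
  h * A + (rd + c) * (- G ^+ 2) <= 0.
Proof.
move=> h0 G0 AG hG rrd.
have s1 : h * A <= h * G by rewrite ler_pM2l.
have s2 : h * G <= G * (r + c) * G by rewrite ler_wpM2r.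
have s3 : G * (r + c) * G <= G * (rd + c) * G.
  by rewrite ler_wpM2r // ler_wpM2l // lerD2r.
have E : (rd + c) * (- G ^+ 2) = - (G * (rd + c) * G) by ring.
rewrite E subr_le0.
exact: le_trans (le_trans s1 s2) s3.
Qed.

Lemma psi_arith {R : realType} (k c h0 H G : R) :
  0 < c -> 0 < h0 -> 0 < H -> 0 <= G -> H ^+ 2 <= G * (h0 * c) ->
  k = 3 * c ^- 2 * h0 ^- 2 ->
  k - (- (H ^+ 3) ^- 2 * ((3%:R * H ^+ 2) * - (G ^+ 2))) <= 0.
Proof.
move=> c0 h00 H0 G0 le ->.
have E : - (H ^+ 3) ^- 2 * ((3%:R * H ^+ 2) * - (G ^+ 2)) = 3 * G ^+ 2 / H ^+ 4.
  by field; rewrite gt_eqF.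
rewrite E subr_le0.
have Gp : 0 < G * (h0 * c) := lt_le_trans (exprn_gt0 2 H0) le.
have P : H ^+ 4 <= G ^+ 2 * (h0 * c) ^+ 2.
  have -> : H ^+ 4 = (H ^+ 2) ^+ 2 by rewrite -exprM.
  rewrite -exprMn (ler_pXn2r (n:=2)) // ?nnegrE ?exprn_ge0 ?ltW //.
rewrite ler_pdivlMr ?exprn_gt0 //.
have q0 : 0 <= 3 / c ^+ 2 / h0 ^+ 2 by rewrite !divr_ge0 // ?exprn_ge0 // ltW.
apply: le_trans (ler_wpM2l q0 P) _.
suff -> : 3 / c ^+ 2 / h0 ^+ 2 * (G ^+ 2 * (h0 * c) ^+ 2) = 3 * G ^+ 2 by [].
by field; rewrite !gt_eqF.
Qed.
Lemma enormN {R : realType} {n : nat} (u : 'rV[R]_n) : enorm (- u) = enorm u.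
Proof. by rewrite /enorm /dotv; congr Num.sqrt; apply: eq_bigr => i _; rewrite !mxE mulrNN. Qed.

Lemma dotv0 {R : realType} {n : nat} : dotv (0 : 'rV[R]_n) 0 = 0.
Proof. by apply: big1 => i _; rewrite mxE mul0r. Qed.

Lemma enorm0 {R : realType} {n : nat} : enorm (0 : 'rV[R]_n) = 0.
Proof. by rewrite /enorm dotv0 sqrtr0. Qed.

Theorem lemma1 (R : realType) (n : nat) (L : 'rV[R]_n -> R) (th0 : 'rV[R]_n)
  (eps Rad c : R) :
  (forall th, 0 <= L th) ->
  (forall th, differentiable L th) ->
  0 < eps -> 0 <= Rad -> 0 < c ->
  (forall th, enorm (th - th0) <= Rad ->
     pospart (L th - eps) / (enorm (th - th0) + c) <= enorm (grad L th)) ->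
  let tau := c / (Rad + c) in
  conv_criterion L th0 (tau * L th0 + (1 - tau) * eps)
    (if pospart (L th0 - eps) == 0 then +oo%E
     else (3 * c ^- 2 * (pospart (L th0 - eps)) ^- 2)%:E).
Proof.
move=> L0 dL eps0 R0 c0 Hg tau.
have Rc0 : 0 < Rad + c by rewrite ltr_wpDl.
have tau0 : 0 < tau by rewrite divr_gt0.
have tau1 : tau <= 1 by rewrite ler_pdivrMr // mul1r lerDr.
have tauE : tau * (Rad + c) = c by rewrite /tau divfK // gt_eqF.
have cL : continuous L by move=> x; exact: differentiable_continuous.
have mono : forall th, gradient_flow L th0 th ->
    forall a b, 0 <= a -> a <= b -> L (th b) <= L (th a).
  move=> th [th00 [thr thd]] a b a0 ab.
  have thr' : th t @[t --> 0^'+] --> th 0 by rewrite th00.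
  have dth : forall s, 0 < s -> derivable th s 1 by move=> s /thd; case.
  apply: (@nincr0 _ (fun s => L (th s))) => //.
  - by move=> s s0 _; exact: isd_der (@chain_L _ _ L th s dL (thd s s0)).
  - exact: (@rlim_comp _ _ th L thr' dth cL 0 (lexx 0)).
  - move=> s s0 _; rewrite (isd_val (@chain_L _ _ L th s dL (thd s s0))).
    by rewrite oppr_le0 dotv_ge0.
rewrite /conv_criterion.
case: ifP => [/eqP P0|/negbT P0].
  have le0 : L th0 - eps <= 0 by rewrite -P0 /pospart le_max lexx orbT.
  move=> th fl t t0.
  have := mono th fl 0 t (lexx 0) t0; case: (fl) => th00 _; rewrite th00 => H.
  apply: (le_trans H).
  nra.
have h0p : 0 < L th0 - eps.
  rewrite ltNge; apply: contra P0 => le0.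
  by apply/eqP; rewrite /pospart; apply/max_idPl.
have Ph : pospart (L th0 - eps) = L th0 - eps by rewrite /pospart; apply/max_idPr/ltW.
rewrite Ph.
set h0 := L th0 - eps.
set k := 3 * c ^- 2 * h0 ^- 2.
have k0 : 0 <= k by rewrite !mulr_ge0 // ?invr_ge0 ?exprn_ge0 // ltW.
split => // th fl t t0.
have [le|gt] := leP (L (th t)) (tau * L th0 + (1 - tau) * eps).
  by apply: (le_trans le); rewrite lerDl powR_ge0.
case: (fl) => th00 [thr thd].
have thr' : th t @[t --> 0^'+] --> th 0 by rewrite th00.
have dth : forall s, 0 < s -> derivable th s 1 by move=> s /thd; case.
have ht : tau * h0 < L (th t) - eps.
  rewrite /h0; move: gt; set eps' := _ + _ => gt.
  have -> : tau * (L th0 - eps) = eps' - eps by rewrite /eps'; ring.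
  by rewrite ltrD2r.
have hpos : forall u, 0 <= u -> u <= t -> tau * h0 < L (th u) - eps.
  move=> u u0 ut; apply: (lt_le_trans ht); rewrite lerD2r.
  exact: mono.
set r := fun s => enorm (th s - th0).
have PhiB : forall b, 0 <= b -> b <= t -> (forall u, 0 < u -> u < b -> r u <= Rad) ->
    (L (th b) - eps) * (r b + c) <= h0 * c.
  move=> b b0 bt ballb.
  have hb : 0 < L (th b) - eps by apply: lt_trans (hpos b b0 bt); rewrite mulr_gt0.
  apply/ler_addgt0Pr => e e0.
  set d := e / h0.
  have d0 : 0 < d by rewrite divr_gt0.
  pose rd := fun s => Num.sqrt (dotv (th s - th0) (th s - th0) + d ^+ 2).
  have rrd : forall s, r s <= rd s.
    move=> s; rewrite /r /rd /enorm ler_sqrt ?lerDl ?sqr_ge0 //.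
    by rewrite addr_ge0 ?dotv_ge0 ?sqr_ge0.
  pose Phi := fun s => (L (th s) - eps) * (rd s + c).
  have dPhi : forall s : R, 0 < s -> is_derive s 1 Phi
      ((L (th s) - eps) *
        ((2 * Num.sqrt (dotv (th s - th0) (th s - th0) + d ^+ 2))^-1 *
          (2 * dotv (th s - th0) (- grad L (th s)))) +
       (rd s + c) * (- dotv (grad L (th s)) (grad L (th s)))).
    move=> s s0; apply: isdM.
      apply: isdBc; exact: (@chain_L _ _ L th s dL (thd s s0)).
    apply: isdDc; exact: (@deriv_rd _ _ th th0 s d _ d0 (thd s s0)).
  have PhiM : Phi b <= Phi 0.
    apply: (@nincr0 _ Phi 0 b) => //.
    - by move=> s s0 _; exact: isd_der (dPhi s s0).
    - apply: (@rlim0 _ _ th (fun x => (L x - eps) *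
          (Num.sqrt (dotv (x - th0) (x - th0) + d ^+ 2) + c))) => //.
      apply: (@continuousM _ _ (fun x => L x - eps)
         (fun x => Num.sqrt (dotv (x - th0) (x - th0) + d ^+ 2) + c)).
        apply: (@continuous_comp _ _ _ L (fun y : R => y - eps)); first exact: cL.
        have D : is_derive (L (th 0)) 1 (fun y : R => y - eps) 1.
          by apply: (@isdBc _ id).
        by apply/differentiable_continuous/derivable1_diffP; exact: isd_der D.
      set y0 := dotv (th 0 - th0) (th 0 - th0).
      have yp : 0 < y0 + d ^+ 2 by rewrite ltr_wpDl ?dotv_ge0 // exprn_gt0.
      have D1 : is_derive y0 1 (fun y : R => y + d ^+ 2) 1 by apply: (@isdDc _ id).
      have D2 := is_derive1_sqrt yp.
      have D3 := @is_derive1_comp _ Num.sqrt (fun y : R => y + d ^+ 2) y0 _ _ D2 D1.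
      have D4 := @isdDc _ (Num.sqrt \o (fun y : R => y + d ^+ 2)) c y0 _ D3.
      have cy : {for y0, continuous (fun y : R => Num.sqrt (y + d ^+ 2) + c)}.
        by apply/differentiable_continuous/derivable1_diffP; exact: isd_der D4.
      exact: (continuous_comp (Q_cont th0 (th 0)) cy).
    - move=> s s0 sb; rewrite (isd_val (dPhi s s0)) -[dotv (grad L (th s)) (grad L (th s))]enorm_sq.
      have st : s <= t by apply: le_trans (ltW sb) bt.
      have hs : 0 < L (th s) - eps by apply: lt_trans (hpos s (ltW s0) st); rewrite mulr_gt0.
      apply: (@phi_arith R _ _ _ (r s)) => //.
      + exact: enorm_ge0.
      + by rewrite -(enormN (grad L (th s))); exact: rd_bound.
      + have := Hg (th s) (ballb s s0 sb).
        have -> : pospart (L (th s) - eps) = L (th s) - eps.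
          by rewrite /pospart; apply/max_idPr/ltW.
        by rewrite ler_pdivrMr // ltr_wpDl // enorm_ge0.
  have Phi0 : Phi 0 = h0 * (d + c).
    by rewrite /Phi /rd th00 subrr dotv0 add0r sqrtr_sqr ger0_norm // ltW.
  apply: (@le_trans _ _ (Phi b)).
    by rewrite /Phi ler_pM2l // lerD2r.
  by rewrite (le_trans PhiM) // Phi0 mulrDr /d mulrCA divff ?gt_eqF // mulr1 addrC.
have r0 : r 0 = 0 by rewrite /r th00 subrr enorm0.
have rge0 : forall s, 0 <= r s by move=> s; exact: enorm_ge0.
have cr : continuous (fun x : 'rV[R]_n => enorm (x - th0)).
  move=> x; exact: (continuous_comp (Q_cont th0 x) (@sqrt_continuous R _)).
pose S := [set s | 0 <= s <= t /\ (forall u, 0 <= u -> u <= s -> r u <= Rad)].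
have S0 : S 0.
  split; first by rewrite lexx ltW.
  move=> u u0 u0'; have -> : u = 0 by apply/eqP; rewrite eq_le u0 u0'.
  by rewrite r0.
have hasS : has_sup S.
  split; first by exists 0.
  by exists t => s [/andP[_ st] _].
set s1 := sup S.
have s10 : 0 <= s1 by exact: sup_upper_bound.
have s1t : s1 <= t by apply: ge_sup; [exists 0|move=> s [/andP[_ st] _]].
have below : forall u, 0 <= u -> u < s1 -> r u <= Rad.
  move=> u u0 us.
  have su : 0 < s1 - u by rewrite subr_gt0.
  have [e [_ He] lt] := sup_adherent su hasS.
  apply: He => //; apply: ltW; move: lt; by rewrite opprB addrCA subrr addr0.
have rs1 : r s1 < Rad.
  apply: (@key_arith R c Rad h0 (L (th s1) - eps) (r s1) tau) => //; first exact: hpos.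
  apply: PhiB => // u u0 us; exact: below (ltW u0) us.
have s1eq : s1 = t.
  apply/eqP; rewrite eq_le s1t /=; rewrite leNgt; apply/negP => st.
  have rr : r s @[s --> s1^'+] --> r s1 := @rlim_comp _ _ th _ thr' dth cr s1 s10.
  have := cvgr_lt _ rr _ rs1.
  move=> [eta /= eta0 Heta].
  set u := Num.min t (s1 + eta / 2).
  have ut : u <= t by rewrite /u ge_min lexx.
  have us : u <= s1 + eta / 2 by rewrite /u ge_min lexx orbT.
  have s1u : s1 < u by rewrite /u lt_min st ltrDl divr_gt0.
  have Su : S u.
    split; first by rewrite ut (le_trans s10 (ltW s1u)).
    move=> v v0 vu.
    have [vs|vs|vs] := ltgtP v s1.
    - exact: below.
    - apply: ltW; apply: Heta => //=.
      rewrite ltr0_norm ?subr_lt0 // opprB.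
      have : v - s1 <= eta / 2 by rewrite lerBlDl (le_trans vu us).
      move=> H; apply: (le_lt_trans H); rewrite ltr_pdivrMr // ltr_pMr //.
      by rewrite ltr1n.
    - by rewrite vs ltW.
  have := sup_upper_bound hasS Su.
  by rewrite -/s1 leNgt s1u.
have ball : forall u, 0 < u -> u < t -> r u <= Rad.
  by move=> u u0 ut; apply: below; [exact: ltW | by rewrite s1eq].
have PB : forall u, 0 <= u -> u <= t -> (L (th u) - eps) * (r u + c) <= h0 * c.
  move=> u u0 ut; apply: PhiB => // v v0 vu; apply: ball => //; exact: lt_le_trans vu ut.
have hp : forall u, 0 <= u -> u <= t -> 0 < L (th u) - eps.
  by move=> u u0 ut; apply: lt_trans (hpos u u0 ut); rewrite mulr_gt0.
have Gb : forall u, 0 < u -> u < t ->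
    L (th u) - eps <= enorm (grad L (th u)) * (r u + c).
  move=> u u0 ut; have := Hg (th u) (ball u u0 ut).
  have -> : pospart (L (th u) - eps) = L (th u) - eps.
    by rewrite /pospart; apply/max_idPr/ltW/hp => //; [exact: ltW|exact: ltW].
  by rewrite ler_pdivrMr // ltr_wpDl // rge0.
have h2 : forall u, 0 < u -> u < t ->
    (L (th u) - eps) ^+ 2 <= enorm (grad L (th u)) * (h0 * c).
  move=> u u0 ut.
  have hu : 0 < L (th u) - eps by apply: hp; apply: ltW.
  rewrite expr2.
  apply: (@le_trans _ _ ((L (th u) - eps) * (enorm (grad L (th u)) * (r u + c)))).
    by rewrite ler_pM2l // Gb.
  rewrite mulrCA ler_wpM2l ?enorm_ge0 //.
  exact: PB (ltW u0) (ltW ut).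
pose Gi := fun x : 'rV[R]_n => ((L x - eps) ^+ 3)^-1.
pose F := fun s => k * s - Gi (th s).
have dF : forall s, 0 < s -> s <= t -> is_derive s 1 F
    (k - (- ((L (th s) - eps) ^+ 3) ^- 2 *
          ((3%:R * (L (th s) - eps) ^+ 2) *
             (- dotv (grad L (th s)) (grad L (th s)))))).
  move=> s s0 st.
  have hs : 0 < L (th s) - eps by apply: hp => //; exact: ltW.
  apply: isdB2; first exact: isd_lin.
  apply: isdV; first by rewrite expf_neq0 // gt_eqF.
  apply: isdX3; apply: isdBc; exact: (@chain_L _ _ L th s dL (thd s s0)).
have FF : F t <= F 0.
  apply: (@nincr0 _ F 0 t) => //; first exact: ltW.
  - by move=> s s0 st; exact: isd_der (dF s s0 st).
  - apply: cvgB.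
      apply: cvg_at_right_filter.
      apply: (@differentiable_continuous _ _ _ 0 (fun x : R => k * x)).
      by apply/derivable1_diffP; exact: isd_der (isd_lin k 0).
    apply: rlim0 => //.
    have hz : (L (th 0) - eps) ^+ 3 != 0 by rewrite th00 expf_neq0 // gt_eqF.
    have D : is_derive (L (th 0)) 1 (fun y : R => ((y - eps) ^+ 3)^-1)
        (- ((L (th 0) - eps) ^+ 3) ^- 2 * ((3%:R * (L (th 0) - eps) ^+ 2) * 1)).
      apply: isdV => //; apply: isdX3; apply: (@isdBc _ id).
    apply: (@continuous_comp _ _ _ L (fun y : R => ((y - eps) ^+ 3)^-1)).
      exact: cL.
    by apply/differentiable_continuous/derivable1_diffP; exact: isd_der D.
  - move=> s s0 st; rewrite (isd_val (dF s s0 (ltW st))).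
    rewrite -enorm_sq; apply: (@psi_arith _ k c h0) => //.
    + by apply: hp => //; exact: ltW.
    + exact: enorm_ge0.
    + exact: h2.
have xt : 0 < L (th t) - eps by apply: hp => //; exact: ltW.
have L0p : 0 < L th0 by apply: lt_trans eps0 _; rewrite -subr_gt0.
have FF' : k * t + (h0 ^+ 3)^-1 <= ((L (th t) - eps) ^+ 3)^-1.
  move: FF; rewrite /F /Gi th00 -/h0 mulr0 sub0r.
  move=> H; lra.
have L0h : (L th0 ^+ 3)^-1 <= (h0 ^+ 3)^-1.
  rewrite lef_pV2 ?posrE ?exprn_gt0 //.
  rewrite (ler_pXn2r (n:=3)) // ?nnegrE ?ltW //.
  all: try (rewrite /h0; lra).
have A0 : 0 < k * t + (L th0 ^+ 3)^-1.
  by rewrite ltr_wpDl ?mulr_ge0 ?ltW // invr_gt0 exprn_gt0.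
have A1 : k * t + (L th0 ^+ 3)^-1 <= k * t + (h0 ^+ 3)^-1 by rewrite lerD2l.
have P := pow_arith _ _ xt A0 (le_trans A1 FF').
have -> : tau * L th0 + (1 - tau) * eps = eps + tau * h0 by rewrite /h0; ring.
rewrite -addrA -lerBlDl.
apply: (le_trans P); rewrite lerDr; apply: mulr_ge0; exact: ltW.
Qed.
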